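(* Let $\mu>1$ be a real number, $N\ge 1$ an integer, and $f:\mathbb{N}\to\mathbb{R}$ a non-negative, non-decreasing function with $\sum_{n=1}^\infty f(n)/n^2<\infty$. Let $a(1),a(2),\dots$ be a sequence of real numbers such that $$a(n+m)\le a(n)+a(m)+f(n+m)$$ holds for all integers $n,m$ with $N\le n\le m\le \mu n$. Then $\lim_{n\to\infty} a(n)/n$ exists (possibly $-\infty$). *)

(* Defs.v *)
From Stdlib Require Export Reals.
Open Scope R_scope.

Definition tends_to_minus_infty (u : nat -> R) : Prop :=
  forall M : R, exists K : nat, forall n : nat, (n >= K)%nat -> u n <= M.

Fixpoint partial_sum_f_over_sq (f : nat -> R) (K : nat) : R :=
  match K with
  | O => 0
  | S k => partial_sum_f_over_sq f k + f (S k) / (INR (S k))^2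
  end.

(* Main.v *)
Require Import Defs.
From Stdlib Require Import Reals Lra Lia Psatz.
Open Scope R_scope.

Lemma half_facts k : (k = k/2 + (k - k/2) /\ k - k/2 <= k/2 + 1 /\ k/2 <= k - k/2)%nat.
Proof. pose proof (Nat.div_mod k 2 ltac:(lia)). pose proof (Nat.mod_upper_bound k 2 ltac:(lia)). lia. Qed.
Lemma div_facts X q : (0 < q)%nat -> (q*(X/q) <= X /\ X < q*(X/q) + q)%nat.
Proof. intros. pose proof (Nat.div_mod X q ltac:(lia)). pose proof (Nat.mod_upper_bound X q ltac:(lia)). lia. Qed.

Notation PS := partial_sum_f_over_sq.

Definition Tt (f : nat -> R) (l : R) (j : nat) : R := 8 * (l - PS f (pred j)).
Definition cc (f : nat -> R) (l : R) (a : nat -> R) (n : nat) : R :=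
  a n / INR n + Tt f l (2 * n - 1).

Lemma PS_step f k : PS f (S k) = PS f k + f (S k) / (INR (S k))^2.
Proof. reflexivity. Qed.

Lemma PS_mono f (hf : forall n, (1 <= n)%nat -> 0 <= f n) :
  forall i j, (i <= j)%nat -> PS f i <= PS f j.
Proof.
  intros i j Hij. induction Hij. lra.
  rewrite PS_step. assert (0 <= f (S m) / INR (S m) ^ 2).
  { apply Rmult_le_pos. apply hf; lia. left. apply Rinv_0_lt_compat.
    apply pow_lt. apply lt_0_INR; lia. }
  lra.
Qed.

Lemma PS_le f l (hf : forall n, (1 <= n)%nat -> 0 <= f n) (hl : Un_cv (PS f) l) n :
  PS f n <= l.
Proof. apply growing_ineq; auto. intro k. apply PS_mono; auto. Qed.

Lemma T_nonneg f l (hf : forall n, (1 <= n)%nat -> 0 <= f n) (hl : Un_cv (PS f) l) j :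
  0 <= Tt f l j.
Proof. unfold Tt. pose proof (PS_le f l hf hl (pred j)). lra. Qed.

Lemma T_anti f l (hf : forall n, (1 <= n)%nat -> 0 <= f n) i j :
  (i <= j)%nat -> Tt f l j <= Tt f l i.
Proof. intros. unfold Tt. pose proof (PS_mono f hf (pred i) (pred j) ltac:(lia)). lra. Qed.

Lemma T_small f l (hl : Un_cv (PS f) l) eps : 0 < eps ->
  exists K, forall j, (K <= j)%nat -> Tt f l j <= eps.
Proof.
  intros He. destruct (hl (eps/8)) as [K HK]. lra.
  exists (S K). intros j Hj. specialize (HK (pred j) ltac:(lia)).
  unfold R_dist in HK. unfold Tt. apply Rabs_def2 in HK. lra.
Qed.

Lemma chunk_aux f (hf : forall n, (1 <= n)%nat -> 0 <= f n)
  (hm : forall n m : nat, (1 <= n)%nat -> (n <= m)%nat -> f n <= f m) k :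
  (1 <= k)%nat -> forall i, (i <= k)%nat ->
  INR i * f k / (4 * INR k ^ 2) <= PS f (k - 1 + i) - PS f (k - 1).
Proof.
  intros Hk i. induction i as [|i IH]; intros Hi.
  - rewrite Nat.add_0_r. simpl. lra.
  - replace (k - 1 + S i)%nat with (S (k - 1 + i)) by lia.
    rewrite PS_step. replace (S (k - 1 + i)) with (k + i)%nat by lia.
    specialize (IH ltac:(lia)).
    assert (Hk0 : 1 <= INR k) by (apply (le_INR 1); lia).
    assert (Hx : INR (k + i) <= 2 * INR k) by (rewrite plus_INR; apply le_INR in Hi; rewrite S_INR in Hi; lra).
    assert (Hx0 : INR k <= INR (k + i)) by (apply le_INR; lia).
    assert (Hf : f k <= f (k + i)%nat) by (apply hm; lia).
    assert (Hf0 : 0 <= f k) by (apply hf; lia).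
    assert (f k / (4 * INR k ^ 2) <= f (k + i)%nat / INR (k + i) ^ 2).
    { unfold Rdiv. apply Rmult_le_compat; auto.
      left; apply Rinv_0_lt_compat; nra.
      apply Rinv_le_contravar. nra. nra. }
    rewrite S_INR. replace ((INR i + 1) * f k / (4 * INR k ^ 2)) with
      (INR i * f k / (4 * INR k ^ 2) + f k / (4 * INR k ^ 2)) by (field; lra).
    lra.
Qed.

Lemma chunk f l (hf : forall n, (1 <= n)%nat -> 0 <= f n)
  (hm : forall n m : nat, (1 <= n)%nat -> (n <= m)%nat -> f n <= f m) k :
  (2 <= k)%nat -> f k / INR k <= Tt f l k - Tt f l (2 * k - 1).
Proof.
  intros Hk. pose proof (chunk_aux f hf hm k ltac:(lia) (k - 1) ltac:(lia)) as H.
  unfold Tt. replace (pred (2 * k - 1)) with (k - 1 + (k - 1))%nat by lia.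
  replace (pred k) with (k - 1)%nat by lia.
  rewrite minus_INR in H by lia. simpl INR in H.
  assert (Hk0 : 2 <= INR k) by (apply (le_INR 2); lia).
  assert (Hf0 : 0 <= f k) by (apply hf; lia).
  assert (f k / INR k <= 8 * ((INR k - 1) * f k / (4 * INR k ^ 2))).
  { replace (8 * ((INR k - 1) * f k / (4 * INR k ^ 2))) with
      (f k / INR k + f k * (INR k - 2) / INR k ^ 2) by (field; lra).
    assert (0 <= f k * (INR k - 2) / INR k ^ 2).
    { apply Rmult_le_pos. nra. left; apply Rinv_0_lt_compat; nra. }
    lra. }
  lra.
Qed.



Lemma core (mu : R) (N : nat) f a l
  (hf : forall n, (1 <= n)%nat -> 0 <= f n)
  (hm : forall n m : nat, (1 <= n)%nat -> (n <= m)%nat -> f n <= f m)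
  (ha : forall n m : nat, (N <= n)%nat -> (n <= m)%nat -> INR m <= mu * INR n ->
        a (n + m)%nat <= a n + a m + f (n + m)%nat) n m :
  (1 <= N)%nat -> (N <= n)%nat -> (n <= m)%nat -> INR m <= mu * INR n ->
  cc f l a (n + m) <= (a n + a m) / INR (n + m) + Tt f l (n + m).
Proof.
  intros HN Hn Hnm Hmu. pose proof (ha n m Hn Hnm Hmu) as H.
  pose proof (chunk f l hf hm (n + m) ltac:(lia)) as Hc.
  unfold cc.
  assert (Hs : 0 < INR (n + m)) by (apply lt_0_INR; lia).
  assert (a (n + m)%nat / INR (n + m) <= (a n + a m) / INR (n + m) + f (n + m)%nat / INR (n + m)).
  { unfold Rdiv. rewrite <- Rmult_plus_distr_r. apply Rmult_le_compat_r.
    left; apply Rinv_0_lt_compat; lra. lra. }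
  lra.
Qed.

Lemma a_eq f l a n : (1 <= n)%nat -> a n = INR n * (cc f l a n - Tt f l (2 * n - 1)).
Proof.
  intros. unfold cc. assert (0 < INR n) by (apply lt_0_INR; lia). field. lra.
Qed.

Lemma halving (mu : R) (N : nat) f a l
  (hf : forall n, (1 <= n)%nat -> 0 <= f n)
  (hm : forall n m : nat, (1 <= n)%nat -> (n <= m)%nat -> f n <= f m)
  (ha : forall n m : nat, (N <= n)%nat -> (n <= m)%nat -> INR m <= mu * INR n ->
        a (n + m)%nat <= a n + a m + f (n + m)%nat) p q :
  (1 <= N)%nat -> (N <= p)%nat -> (p <= q)%nat -> (q <= p + 1)%nat ->
  1 <= (mu - 1) * INR p ->
  cc f l a (p + q) <= Rmax (cc f l a p) (cc f l a q).
Proof.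
  intros HN Hp Hpq Hq Hmu.
  assert (HmuR : INR q <= mu * INR p).
  { apply le_INR in Hq. rewrite plus_INR in Hq. simpl INR in Hq. lra. }
  pose proof (core mu N f a l hf hm ha p q HN Hp Hpq HmuR) as H.
  set (M := Rmax (cc f l a p) (cc f l a q)).
  assert (H1 : cc f l a p <= M) by apply Rmax_l.
  assert (H2 : cc f l a q <= M) by apply Rmax_r.
  rewrite (a_eq f l a p) in H by lia. rewrite (a_eq f l a q) in H by lia.
  assert (T1 : Tt f l (p + q) <= Tt f l (2 * p - 1)) by (apply T_anti; auto; lia).
  assert (T2 : Tt f l (p + q) <= Tt f l (2 * q - 1)) by (apply T_anti; auto; lia).
  assert (Pp : 0 < INR p) by (apply lt_0_INR; lia).
  assert (Pq : 0 < INR q) by (apply lt_0_INR; lia).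
  assert (Hsum : INR p * (cc f l a p - Tt f l (2 * p - 1)) +
                 INR q * (cc f l a q - Tt f l (2 * q - 1)) <= INR (p + q) * (M - Tt f l (p + q))).
  { rewrite plus_INR. nra. }
  assert (Hs : 0 < INR (p + q)) by (apply lt_0_INR; lia).
  assert ((INR p * (cc f l a p - Tt f l (2 * p - 1)) +
                 INR q * (cc f l a q - Tt f l (2 * q - 1))) / INR (p + q) <= M - Tt f l (p + q)).
  { apply (Rmult_le_reg_r (INR (p + q))); auto. unfold Rdiv. rewrite Rmult_assoc, Rinv_l by lra. lra. }
  lra.
Qed.

Lemma propagate (mu : R) (N : nat) f a l
  (hf : forall n, (1 <= n)%nat -> 0 <= f n)
  (hm : forall n m : nat, (1 <= n)%nat -> (n <= m)%nat -> f n <= f m)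
  (ha : forall n m : nat, (N <= n)%nat -> (n <= m)%nat -> INR m <= mu * INR n ->
        a (n + m)%nat <= a n + a m + f (n + m)%nat) y B :
  (1 <= N)%nat -> (N <= y)%nat -> 1 <= (mu - 1) * INR y ->
  (forall j, (y <= j)%nat -> (j <= 2 * y)%nat -> cc f l a j <= B) ->
  forall k, (y <= k)%nat -> cc f l a k <= B.
Proof.
  intros HN Hy Hmu Hint.
  assert (forall K k, (k <= K)%nat -> (y <= k)%nat -> cc f l a k <= B).
  { induction K as [|K IH]; intros k HkK Hyk.
    - apply Hint; lia.
    - destruct (Compare_dec.le_lt_dec k (2 * y)) as [Hk|Hk]. apply Hint; lia.
      destruct (half_facts k) as [E [E1 E2]].
      set (p := (k / 2)%nat) in *. set (q := (k - p)%nat) in *.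
      assert (Hyp : (y <= p)%nat) by lia.
      assert (Hmp : 1 <= (mu - 1) * INR p).
      { apply le_INR in Hyp. pose proof (pos_INR y). assert (0 <= mu - 1) by nra. nra. }
      clearbody p q. subst k.
      eapply Rle_trans. apply (halving mu N f a l hf hm ha p q); auto; lia.
      apply Rmax_lub; apply IH; lia. }
  intros k Hk. apply (H k); lia.
Qed.

Fixpoint Xs (q m t : nat) : nat :=
  match t with O => m | S t => (2 * Xs q m t + Xs q m t / q)%nat end.
Fixpoint Ls (m t : nat) : nat :=
  match t with O => m | S t => (2 * Ls m t)%nat end.

Lemma growth q m : (1 <= q)%nat -> (2 * q <= m)%nat -> forall t,
  (m <= Ls m t /\ Ls m t <= Xs q m t /\ Ls m t * (4 * q + t) <= 4 * q * Xs q m t)%nat.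
Proof.
  intros Hq Hm t. induction t as [|t [IH1 [IH2 IH3]]].
  - simpl. nia.
  - simpl Ls. simpl Xs. set (X := Xs q m t) in *. set (L := Ls m t) in *.
    destruct (div_facts X q ltac:(lia)) as [D1 D2]. set (d := (X / q)%nat) in *.
    split; [lia|]. split; [lia|]. nia.
Qed.

Lemma stepG (mu : R) (N : nat) f a l
  (hf : forall n, (1 <= n)%nat -> 0 <= f n)
  (hm : forall n m : nat, (1 <= n)%nat -> (n <= m)%nat -> f n <= f m)
  (hl : Un_cv (PS f) l)
  (ha : forall n m : nat, (N <= n)%nat -> (n <= m)%nat -> INR m <= mu * INR n ->
        a (n + m)%nat <= a n + a m + f (n + m)%nat) (hmu : 1 < mu) m H n' k G :
  (1 <= N)%nat -> (N <= n')%nat -> (n' <= k)%nat -> INR k <= mu * INR n' -> (m <= n')%nat ->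
  (forall j, (m <= j)%nat -> cc f l a j <= H) -> cc f l a n' <= H - G ->
  cc f l a (n' + k) <= H - G / (1 + mu) + Tt f l m.
Proof.
  intros HN Hn Hnk Hk Hmn HH HG.
  pose proof (core mu N f a l hf hm ha n' k HN Hn Hnk Hk) as C.
  assert (Ts : Tt f l (n' + k) <= Tt f l m) by (apply T_anti; auto; lia).
  rewrite (a_eq f l a n') in C by lia. rewrite (a_eq f l a k) in C by lia.
  pose proof (T_nonneg f l hf hl (2 * n' - 1)) as T1.
  pose proof (T_nonneg f l hf hl (2 * k - 1)) as T2.
  pose proof (HH n' Hmn) as Hn'. pose proof (HH k ltac:(lia)) as Hk'.
  assert (Pn : 0 < INR n') by (apply lt_0_INR; lia).
  assert (Pk : 0 < INR k) by (apply lt_0_INR; lia).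
  assert (Hs : 0 < INR (n' + k)) by (apply lt_0_INR; lia).
  rewrite plus_INR in *.
  set (s := INR n' + INR k) in *.
  set (r := s / (1 + mu)).
  assert (Hr : r <= INR n').
  { unfold r. apply (Rmult_le_reg_r (1 + mu)). lra. unfold Rdiv.
    rewrite Rmult_assoc, Rinv_l by lra. unfold s. lra. }
  assert (Hr0 : 0 <= r) by (unfold r; apply Rmult_le_pos; [lra| left; apply Rinv_0_lt_compat; lra]).
  assert (Hkey : r * G <= INR n' * (H - cc f l a n')).
  { destruct (Rle_lt_dec G 0). nra. nra. }
  assert (Hnum : INR n' * (cc f l a n' - Tt f l (2 * n' - 1)) + INR k * (cc f l a k - Tt f l (2 * k - 1))
                 <= s * (H - G / (1 + mu))).
  { replace (s * (H - G / (1 + mu))) with (s * H - r * G) by (unfold r; field; lra).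
    unfold s. nra. }
  assert ((INR n' * (cc f l a n' - Tt f l (2 * n' - 1)) + INR k * (cc f l a k - Tt f l (2 * k - 1))) / s
          <= H - G / (1 + mu)).
  { apply (Rmult_le_reg_r s); auto. unfold Rdiv. rewrite Rmult_assoc, Rinv_l by lra. lra. }
  lra.
Qed.

Lemma arith A P t T mu : 0 < P -> 1 < mu -> 0 <= t -> 0 <= T ->
  - ((A / P - t * T) / (1 + mu)) + T <= - (A / ((1 + mu) * P)) + (t + 1) * T.
Proof.
  intros HP Hmu Ht HT.
  replace ((A / P - t * T) / (1 + mu)) with (A / ((1 + mu) * P) - t * T * / (1 + mu)) by (field; lra).
  assert (0 < / (1 + mu)) by (apply Rinv_0_lt_compat; lra).
  assert (/ (1 + mu) <= 1).
  { rewrite <- Rinv_1. apply Rinv_le_contravar; lra. }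
  assert (0 <= t * T) by nra. nra.
Qed.

Lemma chain (mu : R) (N : nat) f a l
  (hf : forall n, (1 <= n)%nat -> 0 <= f n)
  (hm : forall n m : nat, (1 <= n)%nat -> (n <= m)%nat -> f n <= f m)
  (hl : Un_cv (PS f) l)
  (ha : forall n m : nat, (N <= n)%nat -> (n <= m)%nat -> INR m <= mu * INR n ->
        a (n + m)%nat <= a n + a m + f (n + m)%nat) (hmu : 1 < mu) q m H :
  (1 <= N)%nat -> (N <= m)%nat -> (1 <= q)%nat -> (2 * q <= m)%nat -> 1 <= (mu - 1) * INR q ->
  (forall j, (m <= j)%nat -> cc f l a j <= H) ->
  forall t n, (Ls m t <= n)%nat -> (n <= Xs q m t)%nat ->
  cc f l a n <= H - (H - cc f l a m) / (1 + mu) ^ t + INR t * Tt f l m.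
Proof.
  intros HN HNm Hq Hqm Hmuq HH t. induction t as [|t IH]; intros n Hn1 Hn2.
  - simpl in Hn1, Hn2. assert (n = m) by lia. subst n. simpl. lra.
  - destruct (growth q m Hq Hqm t) as [G1 [G2 G3]].
    simpl Ls in Hn1. simpl Xs in Hn2.
    set (X := Xs q m t) in *. set (L := Ls m t) in *.
    pose proof (T_nonneg f l hf hl m) as Tm.
    assert (HP : 0 < (1 + mu) ^ t) by (apply pow_lt; lra).
    assert (Hfin : forall n' k, (N <= n')%nat -> (n' <= k)%nat -> INR k <= mu * INR n' ->
              (m <= n')%nat -> (L <= n')%nat -> (n' <= X)%nat -> n = (n' + k)%nat ->
              cc f l a n <= H - (H - cc f l a m) / (1 + mu) ^ S t + INR (S t) * Tt f l m).
    { intros n' k H1 H2 H3 H4 H5 H6 E. subst n.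
      pose proof (IH n' H5 H6) as I.
      eapply Rle_trans.
      apply (stepG mu N f a l hf hm hl ha hmu m H n' k
               ((H - cc f l a m) / (1 + mu) ^ t - INR t * Tt f l m)); auto; lra.
      rewrite S_INR. simpl pow.
      pose proof (arith (H - cc f l a m) ((1 + mu) ^ t) (INR t) (Tt f l m) mu HP hmu (pos_INR t) Tm).
      lra. }
    destruct (half_facts n) as [E [E1 E2]].
    set (p := (n / 2)%nat) in *.
    destruct (Compare_dec.le_lt_dec p X) as [Hp|Hp].
    + apply (Hfin p (n - p)%nat); try lia.
      assert (Hpq : (q <= p)%nat) by lia. apply le_INR in Hpq.
      apply le_INR in E1. rewrite plus_INR in E1. simpl INR in E1.
      pose proof (pos_INR q). assert (0 <= mu - 1) by nra. nra.
    + apply (Hfin X (n - X)%nat); try lia.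
      destruct (div_facts X q ltac:(lia)) as [D1 D2].
      assert (Hk : (n - X <= X + X / q)%nat) by lia.
      apply le_INR in Hk. rewrite plus_INR in Hk.
      apply le_INR in D1. rewrite mult_INR in D1.
      pose proof (pos_INR (X / q)). pose proof (pos_INR q).
      assert (INR (X / q) <= (mu - 1) * INR X) by nra. lra.
Qed.

Lemma lowtail (mu : R) (N : nat) f a l
  (hf : forall n, (1 <= n)%nat -> 0 <= f n)
  (hm : forall n m : nat, (1 <= n)%nat -> (n <= m)%nat -> f n <= f m)
  (hl : Un_cv (PS f) l)
  (ha : forall n m : nat, (N <= n)%nat -> (n <= m)%nat -> INR m <= mu * INR n ->
        a (n + m)%nat <= a n + a m + f (n + m)%nat) (hmu : 1 < mu) q m H :
  (1 <= N)%nat -> (N <= m)%nat -> (1 <= q)%nat -> (2 * q <= m)%nat -> 1 <= (mu - 1) * INR q ->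
  (forall j, (m <= j)%nat -> cc f l a j <= H) ->
  exists y, (m <= y)%nat /\ forall k, (y <= k)%nat ->
  cc f l a k <= H - (H - cc f l a m) / (1 + mu) ^ (4 * q) + INR (4 * q) * Tt f l m.
Proof.
  intros HN HNm Hq Hqm Hmuq HH.
  destruct (growth q m Hq Hqm (4 * q)) as [G1 [G2 G3]].
  exists (Ls m (4 * q)). split; [lia|].
  apply (propagate mu N f a l hf hm ha); auto.
  - lia.
  - assert (Hpq : (q <= Ls m (4 * q))%nat) by lia. apply le_INR in Hpq.
    pose proof (pos_INR q). assert (0 <= mu - 1) by nra. nra.
  - intros j Hj1 Hj2. apply (chain mu N f a l hf hm hl ha hmu q m H); auto.
    nia.
Qed.

Lemma finmax (u : nat -> R) n : exists B, forall j, (j <= n)%nat -> u j <= B.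
Proof.
  induction n as [|n [B HB]].
  - exists (u O). intros j Hj. replace j with O by lia. lra.
  - exists (Rmax B (u (S n))). intros j Hj.
    destruct (Nat.eq_dec j (S n)) as [->|Hne]. apply Rmax_r.
    eapply Rle_trans. apply HB; lia. apply Rmax_l.
Qed.

From Coquelicot Require Import Coquelicot.
From Stdlib Require Import Classical.

Theorem theorem4p4 (mu : R) (N : nat) (f : nat -> R) (a : nat -> R)
  (hmu : 1 < mu) (hN : (1 <= N)%nat)
  (hf_nonneg : forall n : nat, (1 <= n)%nat -> 0 <= f n)
  (hf_mono : forall n m : nat, (1 <= n)%nat -> (n <= m)%nat -> f n <= f m)
  (hf_sum : exists l : R, Un_cv (partial_sum_f_over_sq f) l)
  (ha : forall n m : nat, (N <= n)%nat -> (n <= m)%nat -> INR m <= mu * INR n ->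
        a (n + m)%nat <= a n + a m + f (n + m)%nat) :
  (exists L : R, Un_cv (fun n => a n / INR n) L)
  \/ tends_to_minus_infty (fun n => a n / INR n).
Proof.
  destruct hf_sum as [l hl].
  destruct (INR_unbounded (1 / (mu - 1))) as [q0 Hq0].
  set (q := S q0).
  assert (Hq : (1 <= q)%nat) by (unfold q; lia).
  assert (Hmuq : 1 <= (mu - 1) * INR q).
  { unfold q. rewrite S_INR. assert ((mu - 1) * (1 / (mu - 1)) = 1) by (field; lra).
    assert ((mu - 1) * INR q0 > (mu - 1) * (1 / (mu - 1))) by (apply Rmult_gt_compat_l; lra).
    pose proof (pos_INR q0). nra. }
  assert (Hmu1 : forall y, (q <= y)%nat -> 1 <= (mu - 1) * INR y).
  { intros y Hy. apply le_INR in Hy. pose proof (pos_INR q). nra. }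
  set (c := cc f l a).
  assert (Hub : exists y0 B0, forall k, (y0 <= k)%nat -> c k <= B0).
  { destruct (finmax c (2 * (N + q))) as [B0 HB0].
    exists (N + q)%nat, B0. apply (propagate mu N f a l hf_nonneg hf_mono ha); auto; try lia;
    try (apply Hmu1; lia); try (intros j _ Hj; apply HB0; auto). }
  destruct Hub as [y0 [B0 HB0]].
  destruct (ex_LimSup_seq c) as [[Lam| |] HL]; simpl in HL.
  - left. exists Lam.
    assert (Hc : forall eps, 0 < eps -> exists K, forall n, (K <= n)%nat -> Lam - eps < c n).
    { intros eps He.
      destruct (classic (exists K, forall n, (K <= n)%nat -> Lam - eps < c n)) as [h|h]; auto.
      exfalso.
      assert (h' : forall K, exists n, (K <= n)%nat /\ c n <= Lam - eps).
      { intros K. apply NNPP. intro h2. apply h. exists K. intros n Hn.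
        apply Rnot_le_lt. intro h3. apply h2. exists n. auto. }
      set (P := (1 + mu) ^ (4 * q)).
      assert (HP : 0 < P) by (apply pow_lt; lra).
      set (rho := eps / P).
      assert (Hrho : 0 < rho) by (unfold rho; apply Rdiv_lt_0_compat; lra).
      set (eta := rho / (2 * (1 + INR (4 * q)))).
      assert (Heta : 0 < eta).
      { unfold eta. apply Rdiv_lt_0_compat; auto. pose proof (pos_INR (4 * q)). lra. }
      destruct (HL (mkposreal eta Heta)) as [_ [K1 HK1]]. simpl in HK1.
      destruct (T_small f l hl eta Heta) as [K2 HK2].
      destruct (h' (K1 + K2 + N + 2 * q)%nat) as [m [Hm1 Hm2]].
      destruct (lowtail mu N f a l hf_nonneg hf_mono hl ha hmu q m (Lam + eta))
        as [y [Hy1 Hy2]]; auto; try lia.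
      { intros j Hj. left. apply HK1. lia. }
      destruct (HL (mkposreal (rho / 2) ltac:(lra))) as [HLa _]. simpl in HLa.
      destruct (HLa y) as [n [Hn1 Hn2]].
      pose proof (Hy2 n Hn1) as Hb. fold c in Hb. fold P in Hb.
      assert (Tm : Tt f l m <= eta) by (apply HK2; lia).
      assert (Hg : rho <= (Lam + eta - c m) / P).
      { unfold rho. unfold Rdiv. apply Rmult_le_compat_r. left; apply Rinv_0_lt_compat; lra. lra. }
      assert (Hq4 : 0 <= INR (4 * q)) by apply pos_INR.
      assert (INR (4 * q) * Tt f l m <= INR (4 * q) * eta) by (apply Rmult_le_compat_l; auto).
      assert (Heq : eta + INR (4 * q) * eta = rho / 2) by (unfold eta; field; lra).
      lra. }
    intros eps He.
    destruct (Hc (eps / 2) ltac:(lra)) as [Ka HKa].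
    destruct (HL (mkposreal (eps / 2) ltac:(lra))) as [_ [Kb HKb]]. simpl in HKb.
    destruct (T_small f l hl (eps / 2) ltac:(lra)) as [Kc HKc].
    exists (Ka + Kb + Kc + 1)%nat. intros n Hn.
    specialize (HKa n ltac:(lia)). specialize (HKb n ltac:(lia)).
    specialize (HKc (2 * n - 1)%nat ltac:(lia)).
    pose proof (T_nonneg f l hf_nonneg hl (2 * n - 1)).
    unfold c, cc in HKa, HKb. unfold R_dist. apply Rabs_def1; lra.
  - exfalso. destruct (HL B0 y0) as [n [Hn1 Hn2]]. specialize (HB0 n Hn1). lra.
  - right. intros M. destruct (HL M) as [K HK]. exists K. intros n Hn.
    specialize (HK n Hn). pose proof (T_nonneg f l hf_nonneg hl (2 * n - 1)).
    unfold c, cc in HK. lra.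
Qed.
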